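(* Let $f(x)=\sum_{i,j=1}^n a_{ij}x_ix_j$ be a real quadratic form with symmetric matrix $A=(a_{ij})$ and $\det A\ne0$. Then exactly one of the sets $C(f)$, $\mathrm{St}(f)$ is nonempty.
   Context: $H_n=\{x\in\mathbb R^n:\sum x_i=0\}$; $C(f)$ is the set of $h\in H_n\setminus\{0\}$ such that either $\partial f/\partial x_i(h)\le 0$ for all $i$ or $\partial f/\partial x_i(h)\ge 0$ for all $i$. $\mathrm{St}(f)=\{a\in\mathbb R^n: a_i>0\ \forall i,\ \partial f/\partial x_i(a)=\partial f/\partial x_j(a)\ \forall i,j\}$. *)

(* Defs.v *)
From HB Require Import structures.
From mathcomp Require Import all_boot all_order all_algebra.
From mathcomp Require Import all_classical all_reals all_analysis.
Set Implicit Arguments. Unset Strict Implicit. Unset Printing Implicit Defensive.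
Import Order.TTheory GRing.Theory Num.Theory.
Local Open Scope ring_scope.

(* Vectors of R^n are row vectors 'rV[R]_n; coordinate i of x is x 0 i. *)

Definition qform (R : realType) (n : nat) (A : 'M[R]_n) (x : 'rV[R]_n) : R :=
  \sum_(i < n) \sum_(j < n) A i j * x 0 i * x 0 j.

Definition partial (R : realType) (n : nat) (f : 'rV[R]_n -> R) (i : 'I_n)
    (x : 'rV[R]_n) : R :=
  derive1 (fun t : R => f (x + t *: delta_mx 0 i)) 0.

Definition inH (R : realType) (n : nat) (x : 'rV[R]_n) : Prop :=
  \sum_(i < n) x 0 i = 0.

Definition inC (R : realType) (n : nat) (f : 'rV[R]_n -> R) (h : 'rV[R]_n) : Prop :=
  inH h /\ h <> 0 /\
  ((forall i, partial f i h <= 0) \/ (forall i, partial f i h >= 0)).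

Definition inSt (R : realType) (n : nat) (f : 'rV[R]_n -> R) (a : 'rV[R]_n) : Prop :=
  (forall i, 0 < a 0 i) /\ (forall i j, partial f i a = partial f j a).

(* Main.v *)
Require Import Defs.
From HB Require Import structures.
From mathcomp Require Import all_boot all_order all_algebra.
From mathcomp Require Import all_classical all_reals all_analysis.
From mathcomp Require Import ring.
Import Order.TTheory GRing.Theory Num.Theory.
Local Open Scope ring_scope.
Lemma poly_deriv (R : realType) (a b c : R) :
  derive1 (fun t : R => a + t * b + t * (t * c)) 0 = b.
Proof.
rewrite derive1E derive_val.
rewrite !(scale0r, add0r, mul0r, mul1r, addr0, scaler0, mulr1, scale0r); exact: mulr1.
Qed.

Lemma sum_delta_r (R : realType) n (F : 'I_n -> R) i :
  \sum_j F j * (j == i)%:R = F i.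
Proof.
rewrite (bigD1 i) //= eqxx mulr1 big1 ?addr0 // => j /negbTE ->; by rewrite mulr0.
Qed.

Lemma partial_qform (R : realType) n (A : 'M[R]_n) i x :
  partial (qform A) i x = \sum_j (A i j + A j i) * x 0 j.
Proof.
rewrite /partial.
set S := \sum_j _.
suff -> : (fun t => qform A (x + t *: delta_mx 0 i)) =
   (fun t => qform A x + t * S + t * (t * A i i)) by rewrite poly_deriv.
apply/funext => t; rewrite /qform.
have E : forall k, (x + t *: delta_mx 0 i) 0 k = x 0 k + t * (k == i)%:R.
  by move=> k; rewrite !mxE eqxx /= eq_sym.
have E2 : forall k j, A k j * (x + t *: delta_mx 0 i) 0 k * (x + t *: delta_mx 0 i) 0 j
   = A k j * x 0 k * x 0 j + t * (A k j * x 0 k * (j == i)%:R + (A k j * x 0 j) * (k == i)%:R)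
     + t * (t * ((A k j * (j == i)%:R) * (k == i)%:R)).
  by move=> k j; rewrite !E; ring.
under eq_bigr => k _ do under eq_bigr => j _ do rewrite E2.
under eq_bigr => k _ do rewrite !big_split /= -!mulr_sumr.
rewrite !big_split /= -!mulr_sumr.
congr (_ + _ * _ + _ * (_ * _)).
  under eq_bigr => k _ do rewrite big_split /= sum_delta_r -mulr_suml.
  rewrite big_split /= sum_delta_r /S.
  under [in RHS]eq_bigr => j _ do rewrite mulrDl.
  rewrite big_split /= addrC.
  by congr (_ + _); apply: eq_bigr => j _; rewrite mulrC.
under eq_bigr => k _ do rewrite -mulr_suml sum_delta_r.
by rewrite sum_delta_r.
Qed.

Lemma deltaE (R : realType) n (i l : 'I_n) r : (delta_mx 0 i : 'rV[R]_n) r l = (l == i)%:R.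
Proof. by rewrite mxE (ord1 r) eqxx /= eq_sym. Qed.

Lemma deltaE2 (R : realType) n (c : R) (i l : 'I_n) r : (c *: (delta_mx 0 i : 'rV[R]_n)) r l = c * (l == i)%:R.
Proof. by rewrite mxE deltaE. Qed.

Lemma partial_sym (R : realType) n (A : 'M[R]_n) i x : A^T = A ->
  partial (qform A) i x = 2 * (x *m A) 0 i.
Proof.
move=> hA; rewrite partial_qform mxE mulr_sumr; apply: eq_bigr => j _.
have -> : A i j = A j i by rewrite -{1}hA mxE.
by ring.
Qed.

Lemma excl (R : realType) n (A : 'M[R]_n) (a h : 'rV[R]_n) : A^T = A ->
  A \in unitmx ->
  (forall i, 0 < a 0 i) -> (forall i j, (a *m A) 0 i = (a *m A) 0 j) ->
  inH h -> (forall i, 0 <= (h *m A) 0 i) -> h = 0.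
Proof.
move=> hA hU apos aeq hH hpos.
case: n A a h hA hU apos aeq hH hpos => [|n] A a h hA hU apos aeq hH hpos.
  by apply/matrixP => i [].
set c := (a *m A) 0 ord0.
have key : \sum_i a 0 i * (h *m A) 0 i = 0.
  transitivity (\sum_j h 0 j * (a *m A) 0 j).
    under eq_bigr => i _ do rewrite mxE mulr_sumr.
    rewrite exchange_big /=; apply: eq_bigr => j _.
    rewrite mxE mulr_sumr; apply: eq_bigr => i _.
    have -> : A j i = A i j by rewrite -{1}hA mxE.
    by rewrite mulrCA.
  under eq_bigr => j _ do rewrite (aeq j ord0).
  by rewrite -mulr_suml hH mul0r.
have z : forall i, (h *m A) 0 i = 0.
  move=> i; have := psumr_eq0P (P := predT) _ key (i:=i).
  move=> /(_ (fun i _ => mulr_ge0 (ltW (apos i)) (hpos i)) isT) /eqP.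
  by rewrite mulf_eq0 (gt_eqF (apos i)) /= => /eqP.
have hA0 : h *m A = 0 by apply/matrixP => i j; rewrite (ord1 i) z mxE.
by rewrite -(mulmx1 h) -(mulmxV hU) mulmxA hA0 mul0mx.
Qed.

Theorem proposition2 (R : realType) (n : nat) (A : 'M[R]_n) :
  A^T = A -> \det A != 0 ->
  ((exists h, inC (qform A) h) /\ ~ (exists a, inSt (qform A) a)) \/
  (~ (exists h, inC (qform A) h) /\ (exists a, inSt (qform A) a)).
Proof.
move=> hA hdet.
have hU : A \in unitmx by rewrite unitmxE unitfE.
set B := invmx A.
have BT : B^T = B by rewrite /B trmx_inv hA.
have Bsym : forall i j, B i j = B j i by move=> i j; rewrite -{1}BT mxE.
have two : (0 : R) < 2 by [].
have Cchar : forall h, inC (qform A) h <-> inH h /\ h <> 0 /\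
    ((forall i, (h *m A) 0 i <= 0) \/ (forall i, 0 <= (h *m A) 0 i)).
  move=> h; rewrite /inC; split=> [] [hH [hnz hs]]; (split; [done|split; [done|]]);
    (case: hs => hs; [left|right] => i; have := hs i; rewrite partial_sym //).
  - by rewrite pmulr_rle0.
  - by rewrite pmulr_rge0.
  - by rewrite pmulr_rle0.
  - by rewrite pmulr_rge0.
have Stchar : forall a, inSt (qform A) a ->
    (forall i, 0 < a 0 i) /\ (forall i j, (a *m A) 0 i = (a *m A) 0 j).
  move=> a [apos aeq]; split=> // i j; have := aeq i j.
  by rewrite !partial_sym // => /mulfI; apply; rewrite pnatr_eq0.
have EX : (exists h, inC (qform A) h) -> ~ (exists a, inSt (qform A) a).
  move=> [h /Cchar [hH [hnz hs]]] [a /Stchar [apos aeq]].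
  case: hs => hs.
    apply: hnz; apply: oppr_inj; rewrite oppr0.
    apply: (@excl _ _ A a (- h) hA hU apos aeq).
      by rewrite /inH; under eq_bigr => i _ do rewrite mxE; rewrite sumrN hH oppr0.
    by move=> i; rewrite mulNmx mxE oppr_ge0.
  by apply: hnz; apply: (@excl _ _ A a h hA hU apos aeq).
case: (pselect (exists h, inC (qform A) h)) => [hC|hnC].
  by left; split => //; apply: EX.
right; split => //.
set b : 'rV[R]_n := const_mx 1 *m B.
have bA : b *m A = const_mx 1 by rewrite /b -mulmxA /B (mulVmx hU) mulmx1.
have mkSt : forall s : R, (forall j, 0 < s * b 0 j) -> exists a, inSt (qform A) a.
  move=> s hs; exists (s *: b); split.
    by move=> i; rewrite mxE.
  by move=> i j; rewrite !partial_sym // -scalemxAl bA !mxE.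
have sumB : forall y : 'rV[R]_n, inH (y *m B) <-> \sum_l y 0 l * b 0 l = 0.
  move=> y; rewrite /inH.
  suff -> : \sum_k (y *m B) 0 k = \sum_l y 0 l * b 0 l by [].
  under eq_bigr => k _ do rewrite mxE.
  rewrite exchange_big /=; apply: eq_bigr => l _.
  rewrite mxE mulr_sumr; apply: eq_bigr => k _.
  by rewrite mxE mul1r Bsym.
have mkC : forall y : 'rV[R]_n, y <> 0 -> (forall i, 0 <= y 0 i) ->
    \sum_l y 0 l * b 0 l = 0 -> exists h, inC (qform A) h.
  move=> y ynz ypos ysum; exists (y *m B); apply/Cchar; split; first by apply/sumB.
  rewrite -mulmxA /B (mulVmx hU) mulmx1; split; last by right.
  move=> yB0; apply: ynz.
  by rewrite -(mulmx1 y) -(mulVmx hU) mulmxA yB0 mul0mx.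
case: (pselect (forall j, 0 < b 0 j)) => [hp|hp].
  by apply: (mkSt 1) => j; rewrite mul1r.
case: (pselect (forall j, b 0 j < 0)) => [hn|hn].
  by apply: (mkSt (-1)) => j; rewrite mulN1r oppr_gt0.
move/existsNP: hp => [j hj]; move/existsNP: hn => [i hi].
have {}hj : b 0 j <= 0 by rewrite leNgt; apply/negP.
have {}hi : 0 <= b 0 i by rewrite leNgt; apply/negP.
have dnz : forall k : 'I_n, (delta_mx 0 k : 'rV[R]_n) <> 0.
  by move=> k /matrixP /(_ 0 k); rewrite !mxE !eqxx => /eqP; rewrite oner_eq0.
have dpos : forall k l : 'I_n, 0 <= (delta_mx 0 k : 'rV[R]_n) 0 l.
  by move=> k l; rewrite deltaE ler0n.
have dsum : forall k : 'I_n, \sum_l (delta_mx 0 k : 'rV[R]_n) 0 l * b 0 l = b 0 k.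
  by move=> k; under eq_bigr => l _ do rewrite deltaE mulrC; rewrite sum_delta_r.
case: (eqVneq (b 0 j) 0) => [bj0|bj0].
  by exfalso; apply: hnC; apply: (mkC _ (dnz j) (dpos j)); rewrite dsum.
case: (eqVneq (b 0 i) 0) => [bi0|bi0].
  by exfalso; apply: hnC; apply: (mkC _ (dnz i) (dpos i)); rewrite dsum.
have bjn : b 0 j < 0 by rewrite lt_neqAle bj0.
have bip : 0 < b 0 i by rewrite lt_neqAle eq_sym bi0.
have ij : i != j by apply/eqP => eij; move: bjn; rewrite -eij ltNge ltW.
exfalso; apply: hnC.
apply: (mkC ((- b 0 j) *: delta_mx 0 i + b 0 i *: delta_mx 0 j)).
- move/matrixP => /(_ 0 i); rewrite mxE !deltaE2 eqxx (negbTE ij) mulr0 addr0 mulr1.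
  by move=> /eqP; rewrite [X in _ == X]mxE oppr_eq0 (negbTE bj0).
- move=> l; rewrite mxE !deltaE2; apply: addr_ge0; apply: mulr_ge0 => //;
  by [rewrite oppr_ge0 ltW | rewrite ltW].
- under eq_bigr => l _ do rewrite mxE !deltaE2 mulrDl -!mulrA.
  rewrite big_split /= -!mulr_sumr.
  under eq_bigr => l _ do rewrite mulrC.
  rewrite sum_delta_r.
  under [X in _ + _ * X]eq_bigr => l _ do rewrite mulrC.
  rewrite sum_delta_r; ring.
Qed.
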